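(* Let $B$ be a $\Sigma$-ring containing a $\Sigma$-pseudofield $L$ as a $\Sigma$-subring such that $C_L:=L^\sigma$ is a $\Sigma_1$-closed pseudofield. Let $C\subseteq B^\sigma$ be a $\Sigma_1$-stable subring with $C_L\subseteq C$. Then the natural $\Sigma$-homomorphism $L\otimes_{C_L}C\to B$, $l\otimes c\mapsto lc$, is injective, so that $L\cdot C\cong L\otimes_{C_L}C$, where $L\cdot C$ is the subring of $B$ generated by $L$ and $C$.
   Context: All rings are commutative with $1$. Fix $\Sigma_0=\mathbb Z$ with generator $\sigma$, a finite abelian group $\Sigma_1=\mathbb Z/t_1\mathbb Z\oplus\dots\oplus\mathbb Z/t_s\mathbb Z$ ($t_i\ge2$), and $\Sigma=\Sigma_0\oplus\Sigma_1$. For a subgroup $\Sigma'\subseteq\Sigma$, a $\Sigma'$-ring is a ring with an action of $\Sigma'$ by ring automorphisms; $\Sigma'$-ideals are $\Sigma'$-stable ideals; $R^\sigma$ denotes the $\sigma$-invariants. A $\Sigma'$-ring is $\Sigma'$-simple if its only $\Sigma'$-ideals are $0$ and itself ($\neq0$). A ring is absolutely flat if every module over it is flat. A $\Sigma'$-pseudofield is an absolutely flat $\Sigma'$-simple ring. $C\{y_1,\dots,y_n\}_{\Sigma_1}$ is the polynomial ring over $C$ in indeterminates $\tau y_i$ ($\tau\in\Sigma_1$) with natural $\Sigma_1$-action; $\mathbb V(E)$ is the common zero set in $C^n$ and $\mathbb I(X)$ the ideal of polynomials vanishing on $X$. A $\Sigma_1$-pseudofield $C$ is $\Sigma_1$-closed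 if $\sqrt I=\mathbb I(\mathbb V(I))$ for every $n$ and every $\Sigma_1$-ideal $I\subseteq C\{y_1,\dots,y_n\}_{\Sigma_1}$. The $\Sigma$-action on $L\otimes_{C_L}C$ is the diagonal one. *)

(* Defs.v *)
From HB Require Import structures.
From mathcomp Require Import all_boot all_order all_algebra all_fingroup.
From mathcomp Require Import mpoly.
Set Implicit Arguments. Unset Strict Implicit. Unset Printing Implicit Defensive.
Import GRing.Theory.
Local Open Scope ring_scope.

(* Sigma = Z (+) Sigma_1, with Sigma_1 a finite abelian
   group (gT : finGroupType, [set: gT] abelian).  An action of Sigma on
   a ring B is given by a ring automorphism sigma (image of the generator
   of Z) and an action [act] of Sigma_1 by ring endomorphisms
   (automatically automorphisms) commuting with sigma. *)

Definition Sigma1_action (gT : finGroupType) (B : comNzRingType)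
  (act : gT -> B -> B) : Prop :=
  [/\ forall g, monoid_morphism (act g) /\ {morph act g : x y / x + y},
      forall x, act 1%g x = x &
      forall g h x, act (g * h)%g x = act g (act h x)].

Definition Sigma_action (gT : finGroupType) (B : comNzRingType)
  (sigma : B -> B) (act : gT -> B -> B) : Prop :=
  [/\ Sigma1_action act,
      monoid_morphism sigma /\ {morph sigma : x y / x + y},
      bijective sigma &
      forall g x, sigma (act g x) = act g (sigma x)].

Definition is_subring (B : comNzRingType) (S : {pred B}) : Prop :=
  [/\ 1 \in S,
      forall x y, x \in S -> y \in S -> x - y \in S &
      forall x y, x \in S -> y \in S -> x * y \in S].

Definition is_ideal_of (B : comNzRingType) (S : {pred B}) (I : B -> Prop) : Prop :=
  [/\ forall x, I x -> x \in S,
      I 0,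
      forall x y, I x -> I y -> I (x - y) &
      forall a x, a \in S -> I x -> I (a * x)].

Definition Sigma1_stable_set (gT : finGroupType) (B : comNzRingType)
  (act : gT -> B -> B) (I : B -> Prop) : Prop :=
  forall g x, I x -> I (act g x).

Definition Sigma_stable_set (gT : finGroupType) (B : comNzRingType)
  (sigma : B -> B) (act : gT -> B -> B) (I : B -> Prop) : Prop :=
  Sigma1_stable_set act I /\ forall x, I x <-> I (sigma x).

(* "stable" selects the relevant group (Sigma or Sigma_1). *)
Definition simple_for (B : comNzRingType) (S : {pred B})
  (stable : (B -> Prop) -> Prop) : Prop :=
  (exists x, x \in S /\ x <> 0) /\
  forall I : B -> Prop, is_ideal_of S I -> stable I ->
    (forall x, I x <-> x = 0) \/ (forall x, I x <-> x \in S).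

(* Absolutely flat, in its von Neumann regular form. *)
Definition absolutely_flat (B : comNzRingType) (S : {pred B}) : Prop :=
  forall a, a \in S -> exists2 x, x \in S & a = a * a * x.

Definition Sigma_pseudofield (gT : finGroupType) (B : comNzRingType)
  (sigma : B -> B) (act : gT -> B -> B) (S : {pred B}) : Prop :=
  absolutely_flat S /\ simple_for S (Sigma_stable_set sigma act).

Definition Sigma1_pseudofield (gT : finGroupType) (B : comNzRingType)
  (act : gT -> B -> B) (S : {pred B}) : Prop :=
  absolutely_flat S /\ simple_for S (Sigma1_stable_set act).

(* Sigma_1-polynomials: C{y_1..y_n}_{Sigma_1} is realized inside
   {mpoly B[nvar n]}, the variable tau y_i being 'X_(enum_rank (i, tau)),
   as the polynomials with coefficients in C. *)

Definition nvar (gT : finGroupType) (n : nat) : nat := #|{: 'I_n * gT}|.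

Definition spoly_var (gT : finGroupType) (n : nat) (i : 'I_n) (t : gT)
  : 'I_(nvar gT n) := enum_rank (i, t).

(* action of tau on polynomials: on coefficients, and tau' y_i |-> (tau tau') y_i *)
Definition spoly_act (gT : finGroupType) (B : comNzRingType) (act : gT -> B -> B)
  (n : nat) (t : gT) (p : {mpoly B[nvar gT n]}) : {mpoly B[nvar gT n]} :=
  mmap (fun b => (act t b)%:MP)
       (fun j => 'X_(spoly_var (enum_val j).1 (t * (enum_val j).2)%g)) p.

Definition spoly_eval (gT : finGroupType) (B : comNzRingType) (act : gT -> B -> B)
  (n : nat) (x : 'I_n -> B) (p : {mpoly B[nvar gT n]}) : B :=
  p.@[fun j => act (enum_val j).2 (x (enum_val j).1)].

Definition is_Sigma1_poly_ideal (gT : finGroupType) (B : comNzRingType)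
  (act : gT -> B -> B) (C : {pred B}) (n : nat)
  (I : {mpoly B[nvar gT n]} -> Prop) : Prop :=
  [/\ forall p, I p -> p \is a mpolyOver _ C,
      I 0,
      forall p q, I p -> I q -> I (p - q),
      forall a p, a \is a mpolyOver _ C -> I p -> I (a * p) &
      forall t p, I p -> I (spoly_act act t p)].

Definition spoly_V (gT : finGroupType) (B : comNzRingType) (act : gT -> B -> B)
  (C : {pred B}) (n : nat) (I : {mpoly B[nvar gT n]} -> Prop) (x : 'I_n -> B)
  : Prop :=
  (forall i, x i \in C) /\ forall p, I p -> spoly_eval act x p = 0.

Definition Sigma1_closed (gT : finGroupType) (B : comNzRingType)
  (act : gT -> B -> B) (C : {pred B}) : Prop :=
  Sigma1_pseudofield act C /\
  forall (n : nat) (I : {mpoly B[nvar gT n]} -> Prop),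
    is_Sigma1_poly_ideal act C I ->
    forall p, p \is a mpolyOver _ C ->
      ((exists m : nat, I (p ^+ m)) <->
       (forall x, spoly_V act C I x -> spoly_eval act x p = 0)).

(* The tensor product L (x)_{C_L} C, as the free abelian group on L x C
   modulo the bilinearity / balancedness relations.  A formal
   Z-combination is a list of ((l, c), k) meaning sum k (l (x) c). *)

Definition fsum (B : comNzRingType) := seq ((B * B) * int).

Definition fcoef (B : comNzRingType) (s : fsum B) (lc : B * B) : int :=
  \sum_(e <- s | e.1 == lc) e.2.

Definition fsum_on (B : comNzRingType) (L C : {pred B}) (s : fsum B) : Prop :=
  forall e, e \in s -> (e.1.1 \in L) && (e.1.2 \in C).

Inductive tensor_rel (B : comNzRingType) (L C CL : {pred B}) : fsum B -> Prop :=
| trel_nil : tensor_rel L C CL [::]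
| trel_addl l l' c : l \in L -> l' \in L -> c \in C ->
    tensor_rel L C CL [:: ((l + l', c), 1); ((l, c), -1); ((l', c), -1)]
| trel_addr l c c' : l \in L -> c \in C -> c' \in C ->
    tensor_rel L C CL [:: ((l, c + c'), 1); ((l, c), -1); ((l, c'), -1)]
| trel_bal l a c : l \in L -> a \in CL -> c \in C ->
    tensor_rel L C CL [:: ((l * a, c), 1); ((l, a * c), -1)]
| trel_cat s t : tensor_rel L C CL s -> tensor_rel L C CL t ->
    tensor_rel L C CL (s ++ t)
| trel_scale (z : int) s : tensor_rel L C CL s ->
    tensor_rel L C CL [seq (e.1, e.2 * z) | e <- s].

Definition tensor_zero (B : comNzRingType) (L C CL : {pred B}) (s : fsum B) : Prop :=
  exists2 r, tensor_rel L C CL r & forall lc, fcoef s lc = fcoef r lc.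

Definition tensor_mult (B : comNzRingType) (s : fsum B) : B :=
  \sum_(e <- s) (e.1.1 * e.1.2) *~ e.2.

Definition tensor_mult_injective (B : comNzRingType) (L C CL : {pred B}) : Prop :=
  forall s : fsum B, fsum_on L C s -> tensor_mult s = 0 -> tensor_zero L C CL s.

(* Main.v *)
From HB Require Import structures.
From mathcomp Require Import all_boot all_order all_algebra all_fingroup.
From mathcomp Require Import mpoly.
Require Import Defs.
Set Implicit Arguments. Unset Strict Implicit. Unset Printing Implicit Defensive.
Import GRing.Theory.
Local Open Scope ring_scope.
From Stdlib Require Import Classical.
Section Sub.
Variables (B : comNzRingType) (S : {pred B}) (HS : is_subring S).
Lemma sub1 : 1 \in S. Proof. by case: HS. Qed.
Lemma subB x y : x \in S -> y \in S -> x - y \in S. Proof. by case: HS => _ h _; apply: h. Qed.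
Lemma subM x y : x \in S -> y \in S -> x * y \in S. Proof. by case: HS => _ _ h; apply: h. Qed.
Lemma sub0 : 0 \in S. Proof. by rewrite -(subrr 1) subB ?sub1. Qed.
Lemma subN x : x \in S -> - x \in S. Proof. by move=> h; rewrite -sub0r subB ?sub0. Qed.
Lemma subD x y : x \in S -> y \in S -> x + y \in S.
Proof. by move=> hx hy; rewrite -(opprK y) subB ?subN. Qed.
Lemma sub_sum (I : Type) (r : seq I) (P : pred I) (F : I -> B) :
  (forall i, P i -> F i \in S) -> \sum_(i <- r | P i) F i \in S.
Proof. move=> h; apply: (big_ind (fun x => x \in S)) => //; [exact: sub0 | exact: subD]. Qed.
Lemma subMn x n : x \in S -> x *+ n \in S.
Proof. by move=> hx; elim: n => [|n IH]; rewrite ?mulr0n ?sub0 // mulrS subD. Qed.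
Lemma subMz x z : x \in S -> x *~ z \in S.
Proof. by move=> hx; case: z => n; rewrite ?NegzE ?mulrNz ?subN ?subMn. Qed.
End Sub.

Section Mor.
Variables (B : comNzRingType) (f : B -> B) (fD : {morph f : x y / x + y}).
Lemma mor0 : f 0 = 0.
Proof. have h := fD 0 0; rewrite addr0 in h; apply: (@addrI _ (f 0)); by rewrite addr0 -h. Qed.
Lemma morN x : f (- x) = - f x.
Proof. by apply/eqP; rewrite -addr_eq0 -fD addNr mor0. Qed.
Lemma morB x y : f (x - y) = f x - f y. Proof. by rewrite fD morN. Qed.
Lemma mor_sum (I : Type) (r : seq I) (P : pred I) (F : I -> B) :
  f (\sum_(i <- r | P i) F i) = \sum_(i <- r | P i) f (F i).
Proof. exact: (big_morph f fD mor0). Qed.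
Lemma morMn x n : f (x *+ n) = f x *+ n.
Proof. by elim: n => [|n IH]; rewrite ?mulr0n ?mor0 // !mulrS fD IH. Qed.
Lemma morMz x z : f (x *~ z) = f x *~ z.
Proof. by case: z => n; rewrite ?NegzE ?mulrNz ?morN morMn. Qed.
End Mor.
Section Tensor.
Variables (B : comNzRingType) (L C CL : {pred B}).
Hypotheses (HL : is_subring L) (HC : is_subring C).

Definition Rg (f : B * B -> int) : Prop :=
  exists2 r : fsum B, tensor_rel L C CL r & forall lc, f lc = fcoef r lc.

Lemma Rg_ext f g : (forall lc, f lc = g lc) -> Rg f -> Rg g.
Proof. by move=> e [r hr hf]; exists r => // lc; rewrite -e. Qed.

Lemma fcoef_nil lc : fcoef ([::] : fsum B) lc = 0.
Proof. by rewrite /fcoef big_nil. Qed.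
Lemma fcoef_cons (e : (B * B) * int) (s : fsum B) lc : fcoef (e :: s) lc = (if e.1 == lc then e.2 else 0) + fcoef s lc.
Proof. by rewrite /fcoef big_cons; case: ifP => _; rewrite ?add0r. Qed.
Lemma fcoef_cat (s t : fsum B) lc : fcoef (s ++ t) lc = fcoef s lc + fcoef t lc.
Proof. by rewrite /fcoef big_cat. Qed.
Definition fscale (z : int) (s : fsum B) : fsum B := [seq (e.1, e.2 * z) | e <- s].
Lemma fcoef_scale z (s : fsum B) lc : fcoef (fscale z s) lc = fcoef s lc * z.
Proof. by rewrite /fcoef big_map mulr_suml. Qed.
Lemma fcoef_flatten (ss : seq (fsum B)) lc :
  fcoef (flatten ss) lc = \sum_(s <- ss) fcoef s lc.
Proof. elim: ss => [|s ss IH]; by rewrite ?big_nil ?fcoef_nil // big_cons fcoef_cat IH. Qed.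

Lemma Rg0 : Rg (fun _ => 0).
Proof. by exists [::]; [constructor | move=> lc; rewrite fcoef_nil]. Qed.
Lemma RgD f g : Rg f -> Rg g -> Rg (fun lc => f lc + g lc).
Proof.
move=> [r hr hf] [r' hr' hg]; exists (r ++ r'); first by constructor.
by move=> lc; rewrite fcoef_cat hf hg.
Qed.
Lemma RgZ z f : Rg f -> Rg (fun lc => f lc * z).
Proof.
move=> [r hr hf]; exists (fscale z r); first by constructor.
by move=> lc; rewrite fcoef_scale hf.
Qed.
Lemma RgN f : Rg f -> Rg (fun lc => - f lc).
Proof. by move/(RgZ (-1)); apply: Rg_ext => lc; rewrite mulrN1. Qed.

Definition eqv (s t : fsum B) := Rg (fun lc => fcoef s lc - fcoef t lc).

Lemma eqv_fc (s t : fsum B) : (forall lc, fcoef s lc = fcoef t lc) -> eqv s t.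
Proof. by move=> e; apply: Rg_ext Rg0 => lc; rewrite e subrr. Qed.
Lemma eqv_refl (s : fsum B) : eqv s s. Proof. exact: eqv_fc. Qed.
Lemma eqv_sym (s t : fsum B) : eqv s t -> eqv t s.
Proof. by move/RgN; apply: Rg_ext => lc; rewrite opprB. Qed.
Lemma eqv_trans (s t w : fsum B) : eqv s t -> eqv t w -> eqv s w.
Proof. by move=> h1 h2; apply: Rg_ext (RgD h1 h2) => lc; rewrite addrA subrK. Qed.
Lemma eqv_cat (s1 s2 t1 t2 : fsum B) : eqv s1 t1 -> eqv s2 t2 -> eqv (s1 ++ s2) (t1 ++ t2).
Proof.
move=> h1 h2; apply: Rg_ext (RgD h1 h2) => lc.
by rewrite !fcoef_cat opprD addrACA.
Qed.
Lemma eqv_scale z (s t : fsum B) : eqv s t -> eqv (fscale z s) (fscale z t).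
Proof. by move/(RgZ z); apply: Rg_ext => lc; rewrite !fcoef_scale mulrBl. Qed.
Lemma eqv_flatten (X : eqType) (r : seq X) (F G : X -> fsum B) :
  (forall x, x \in r -> eqv (F x) (G x)) ->
  eqv (flatten [seq F x | x <- r]) (flatten [seq G x | x <- r]).
Proof.
elim: r => [|x r IH] h /=; first exact: eqv_refl.
apply: eqv_cat; first by apply: h; rewrite mem_head.
by apply: IH => y hy; apply: h; rewrite in_cons hy orbT.
Qed.
Lemma eqv_tz (s : fsum B) : eqv s [::] -> tensor_zero L C CL s.
Proof. by move=> [r hr e]; exists r => // lc; rewrite -e fcoef_nil subr0. Qed.
Lemma tz_eqv (s : fsum B) : tensor_zero L C CL s -> eqv s [::].
Proof. by move=> [r hr e]; exists r => // lc; rewrite e fcoef_nil subr0. Qed.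

Lemma Rg_rel (r : fsum B) : tensor_rel L C CL r -> Rg (fcoef r).
Proof. by move=> hr; exists r. Qed.

Lemma E_addl l l' c : l \in L -> l' \in L -> c \in C ->
  eqv [:: ((l + l', c), 1)] [:: ((l, c), 1); ((l', c), 1)].
Proof.
move=> hl hl' hc; apply: Rg_ext (Rg_rel (trel_addl CL hl hl' hc)) => lc.
rewrite !fcoef_cons !fcoef_nil !addr0.
by case: (_ == lc); case: (_ == lc); case: (_ == lc); rewrite ?subr0 ?opprD ?addrA.
Qed.
Lemma E_addr l c c' : l \in L -> c \in C -> c' \in C ->
  eqv [:: ((l, c + c'), 1)] [:: ((l, c), 1); ((l, c'), 1)].
Proof.
move=> hl hc hc'; apply: Rg_ext (Rg_rel (trel_addr CL hl hc hc')) => lc.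
rewrite !fcoef_cons !fcoef_nil !addr0.
by case: (_ == lc); case: (_ == lc); case: (_ == lc); rewrite ?subr0 ?opprD ?addrA.
Qed.
Lemma E_bal l a c : l \in L -> a \in CL -> c \in C ->
  eqv [:: ((l * a, c), 1)] [:: ((l, a * c), 1)].
Proof.
move=> hl ha hc; apply: Rg_ext (Rg_rel (trel_bal hl ha hc)) => lc.
rewrite !fcoef_cons !fcoef_nil !addr0.
by case: (_ == lc); case: (_ == lc); rewrite ?subr0.
Qed.
Lemma E_zero c : c \in C -> eqv [:: ((0, c), 1)] [::].
Proof.
move=> hc; have h := E_addl (sub0 HL) (sub0 HL) hc; rewrite addr0 in h.
apply: Rg_ext (RgN h) => lc; rewrite !fcoef_cons !fcoef_nil.
by case: (_ == lc); rewrite ?subr0 ?opprB ?addr0 // addrK.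
Qed.
Lemma E_zero_r l : l \in L -> eqv [:: ((l, 0), 1)] [::].
Proof.
move=> hl; have h := E_addr hl (sub0 HC) (sub0 HC); rewrite addr0 in h.
apply: Rg_ext (RgN h) => lc; rewrite !fcoef_cons !fcoef_nil.
by case: (_ == lc); rewrite ?subr0 ?opprB ?addr0 // addrK.
Qed.
Lemma E_neg l c : l \in L -> c \in C ->
  eqv [:: ((- l, c), 1)] [:: ((l, c), -1)].
Proof.
move=> hl hc; have h := E_addl hl (subN HL hl) hc; rewrite subrr in h.
have h2 := eqv_trans (eqv_sym h) (E_zero hc).
apply: Rg_ext h2 => lc; rewrite !fcoef_cons !fcoef_nil.
by case: (_ == lc); case: (_ == lc); rewrite ?subr0 ?sub0r ?addr0 ?add0r ?opprK.
Qed.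
Lemma E_mulz l c z : l \in L -> c \in C ->
  eqv [:: ((l, c), z)] [:: ((l *~ z, c), 1)].
Proof.
move=> hl hc.
have hn n : eqv [:: ((l, c), n%:Z)] [:: ((l *+ n, c), 1)].
  elim: n => [|n IH].
    rewrite mulr0n; apply: eqv_sym; apply: eqv_trans (E_zero hc) _.
    by apply: eqv_fc => lc; rewrite !fcoef_cons !fcoef_nil; case: ifP.
  rewrite mulrSr.
  apply: (eqv_trans _ (eqv_sym (E_addl (subMn HL n hl) hl hc))).
  apply: (@eqv_trans _ ([:: ((l, c), n%:Z)] ++ [:: ((l, c), 1)])).
    apply: eqv_fc => lc; rewrite fcoef_cat !fcoef_cons !fcoef_nil.
    by case: ifP => _; rewrite ?addr0 // -add1n PoszD addrC.
  by apply: (eqv_cat IH (eqv_refl _)).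
case: z => n; first exact: hn.
rewrite NegzE mulrNz.
apply: (eqv_trans _ (eqv_sym (E_neg (subMn HL n.+1 hl) hc))).
have := eqv_scale (-1) (hn n.+1); rewrite /fscale /= => h.
apply: eqv_trans (eqv_trans h _); first by apply: eqv_fc => lc; rewrite !fcoef_cons !fcoef_nil mulrN1.
by apply: eqv_fc => lc; rewrite !fcoef_cons !fcoef_nil mul1r.
Qed.

Lemma merge_l (X : eqType) (r : seq X) (F : X -> B) c :
  (forall x, x \in r -> F x \in L) -> c \in C ->
  eqv [seq ((F x, c), 1) | x <- r] [:: ((\sum_(x <- r) F x, c), 1)].
Proof.
move=> hF hc; elim: r hF => [|x r IH] hF /=.
  by rewrite big_nil; apply: eqv_sym; apply: E_zero.
have hF' y : y \in r -> F y \in L by move=> hy; apply: hF; rewrite in_cons hy orbT.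
rewrite big_cons; apply: eqv_sym.
apply: eqv_trans (E_addl (hF x (mem_head _ _)) _ hc) _.
  by rewrite big_seq; apply: (sub_sum HL) => y /hF'.
by apply: (eqv_cat (eqv_refl [:: _]) (eqv_sym (IH hF'))).
Qed.

Lemma merge_r (X : eqType) (r : seq X) (G : X -> B) l :
  l \in L -> (forall x, x \in r -> G x \in C) ->
  eqv [seq ((l, G x), 1) | x <- r] [:: ((l, \sum_(x <- r) G x), 1)].
Proof.
move=> hl hG; elim: r hG => [|x r IH] hG /=.
  by rewrite big_nil; apply: eqv_sym; apply: E_zero_r.
have hG' y : y \in r -> G y \in C by move=> hy; apply: hG; rewrite in_cons hy orbT.
rewrite big_cons; apply: eqv_sym.
apply: eqv_trans (E_addr hl (hG x (mem_head _ _)) _) _.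
  by rewrite big_seq; apply: (sub_sum HC) => y /hG'.
by apply: (eqv_cat (eqv_refl [:: _]) (eqv_sym (IH hG'))).
Qed.

Lemma eqv_map (X : eqType) (r : seq X) (F G : X -> (B * B) * int) :
  (forall x, x \in r -> eqv [:: F x] [:: G x]) -> eqv (map F r) (map G r).
Proof.
elim: r => [|x r IH] h /=; first exact: eqv_refl.
apply: (eqv_cat (s1 := [:: F x]) (t1 := [:: G x])); first by apply: h; rewrite mem_head.
by apply: IH => y hy; apply: h; rewrite in_cons hy orbT.
Qed.

Lemma fcoef_map (X : Type) (r : seq X) (F : X -> (B * B) * int) lc :
  fcoef (map F r) lc = \sum_(x <- r) (if (F x).1 == lc then (F x).2 else 0).
Proof. by rewrite /fcoef big_map big_mkcond. Qed.

Lemma eqv_nil_flatten (X : Type) (r : seq X) :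
  eqv (flatten [seq [::] | x <- r]) [::].
Proof. by apply: eqv_fc => lc; rewrite fcoef_flatten big_map big1 ?fcoef_nil. Qed.

End Tensor.
Section Main.
Variables (gT : finGroupType) (B : comNzRingType) (sigma : B -> B)
  (act : gT -> B -> B) (L C : {pred B}).
Hypotheses (HSA : Sigma_action sigma act) (HL : is_subring L)
  (HLs : forall x, (x \in L) = (sigma x \in L))
  (HLa : forall g x, x \in L -> act g x \in L)
  (HLp : Sigma_pseudofield sigma act L)
  (HC : is_subring C) (HCa : forall g x, x \in C -> act g x \in C)
  (HCs : forall x, x \in C -> sigma x = x)
  (HLC : forall x, x \in L -> sigma x = x -> x \in C).

Definition CLp : {pred B} := [pred x | (x \in L) && (sigma x == x)].

Lemma actD g : {morph act g : x y / x + y}.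
Proof. by case: HSA => [[h _ _]] _ _ _; case: (h g). Qed.
Lemma act_1 g : act g 1 = 1.
Proof. by case: HSA => [[h _ _]] _ _ _; case: (h g) => [[]]. Qed.
Lemma act_mul g x y : act g (x * y) = act g x * act g y.
Proof. by case: HSA => [[h _ _]] _ _ _; case: (h g) => [[]]. Qed.
Lemma act1 x : act 1%g x = x.
Proof. by case: HSA => [[_ h _]]. Qed.
Lemma actMg g h x : act (g * h)%g x = act g (act h x).
Proof. by case: HSA => [[_ _ h']]. Qed.
Lemma act_inv g x : act g^-1 (act g x) = x.
Proof. by rewrite -actMg mulVg act1. Qed.
Lemma act_invr g x : act g (act g^-1 x) = x.
Proof. by rewrite -actMg mulgV act1. Qed.
Lemma sigD : {morph sigma : x y / x + y}.
Proof. by case: HSA => _ [_ h] _ _. Qed.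
Lemma sig_mul x y : sigma (x * y) = sigma x * sigma y.
Proof. by case: HSA => _ [[_ h] _] _ _. Qed.
Lemma sig_act g x : sigma (act g x) = act g (sigma x).
Proof. by case: HSA. Qed.
Lemma sig_bij : bijective sigma.
Proof. by case: HSA. Qed.
Lemma sig_inj : injective sigma.
Proof. exact: bij_inj sig_bij. Qed.

Lemma CL_L x : x \in CLp -> x \in L. Proof. by case/andP. Qed.
Lemma CL_sig x : x \in CLp -> sigma x = x. Proof. by case/andP => _ /eqP. Qed.
Lemma CL_act g x : x \in CLp -> act g x \in CLp.
Proof. by case/andP => h /eqP e; rewrite inE HLa //= sig_act e eqxx. Qed.
Lemma CL0 : 0 \in CLp. Proof. by rewrite inE (sub0 HL) (mor0 sigD) eqxx. Qed.
Lemma CLN x : x \in CLp -> - x \in CLp.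
Proof. by case/andP => h /eqP e; rewrite inE (subN HL) //= (morN sigD) e eqxx. Qed.

Definition actmap g (s : fsum B) : fsum B :=
  [seq ((act g e.1.1, act g e.1.2), e.2) | e <- s].

Lemma rel_act g r : tensor_rel L C CLp r -> tensor_rel L C CLp (actmap g r).
Proof.
elim=> {r} /=.
- by constructor.
- move=> l l' c hl hl' hc; rewrite actD; constructor; auto.
- move=> l c c' hl hc hc'; rewrite actD; constructor; auto.
- move=> l a c hl ha hc; rewrite !act_mul; constructor; auto; exact: CL_act.
- by move=> s t _ h1 _ h2; rewrite /actmap map_cat; constructor.
- move=> z s _ h.
  have -> : actmap g [seq (e.1, e.2 * z) | e <- s] = [seq (e.1, e.2 * z) | e <- actmap g s].
    by rewrite /actmap -!map_comp.
  by constructor.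
Qed.

Lemma fcoef_act g (s : fsum B) lc :
  fcoef (actmap g s) lc = fcoef s (act g^-1 lc.1, act g^-1 lc.2).
Proof.
rewrite /fcoef big_map; apply: eq_bigl => e /=.
case: lc => a b; case: e => [[x y] z] /=.
have h v w : (act g v == w) = (v == act g^-1 w).
  by apply/eqP/eqP => [<-|->]; rewrite ?act_inv ?act_invr.
by rewrite !xpair_eqE /= !h.
Qed.

Lemma tz_act g (s : fsum B) : tensor_zero L C CLp s -> tensor_zero L C CLp (actmap g s).
Proof.
move=> [r hr e]; exists (actmap g r); first exact: rel_act.
by move=> lc; rewrite !fcoef_act e.
Qed.


Variable u : B.
Hypotheses (uCL : u \in CLp) (uu : u * u = u)
  (uorth : forall t, t != 1%g -> u * act t u = 0)
  (usum : \sum_(t : gT) act t u = 1).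

Lemma uL_simple (J : B -> Prop) :
  (forall x, J x -> x \in L /\ u * x = x) -> J 0 ->
  (forall x y, J x -> J y -> J (x - y)) ->
  (forall a x, a \in L -> J x -> J (a * x)) ->
  (forall x, J x <-> J (sigma x)) ->
  forall m, J m -> m != 0 -> J u.
Proof.
move=> Jsub J0 JB JM Js m Jm m0.
case: sig_bij => si siK siK'.
pose K x := exists f : gT -> B, (forall t, J (f t)) /\ x = \sum_(t : gT) act t (f t).
have KI : is_ideal_of L K.
  split.
  - move=> x [f [hf ->]]; apply: (sub_sum HL) => t _; apply: HLa.
    by case: (Jsub _ (hf t)).
  - exists (fun _ => 0); split => //; rewrite big1 // => t _; exact: (mor0 (actD t)).
  - move=> x y [f [hf ->]] [f' [hf' ->]]; exists (fun t => f t - f' t).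
    split => [t|]; first exact: JB.
    by rewrite -sumrB; apply: eq_bigr => t _; rewrite (morB (actD t)).
  - move=> a x ha [f [hf ->]]; exists (fun t => act t^-1 a * f t).
    split => [t|]; first by apply: JM => //; apply: HLa.
    by rewrite mulr_sumr; apply: eq_bigr => t _; rewrite act_mul act_invr.
have KS : Sigma_stable_set sigma act K.
  split.
  - move=> g x [f [hf ->]]; exists (fun t => f (g^-1 * t)%g); split => [t|]; first exact: hf.
    rewrite (mor_sum (actD g)) [RHS](reindex_inj (mulgI g)) /=.
    by apply: eq_bigr => t _; rewrite mulKg actMg.
  - move=> x; split.
    + move=> [f [hf ->]]; exists (fun t => sigma (f t)); split => [t|]; first exact: (proj1 (Js (f t)) (hf t)).
      by rewrite (mor_sum sigD); apply: eq_bigr => t _; exact: sig_act.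
    + move=> [f [hf e]]; exists (fun t => si (f t)); split => [t|].
        by apply: (proj2 (Js _)); rewrite siK'; exact: hf.
      apply: sig_inj; rewrite e (mor_sum sigD); apply: eq_bigr => t _.
      by rewrite sig_act siK'.
have Km : K m.
  exists (fun t => if t == 1%g then m else 0); split => [t|]; first by case: ifP.
  rewrite (bigD1 1%g) //= eqxx act1 big1 ?addr0 // => t /negbTE ->.
  exact: (mor0 (actD t)).
case: HLp => _ [_ /(_ K KI KS)] [h|h].
  by move/h: Km => /eqP; rewrite (negbTE m0).
have [f [hf e]] : K u by apply/h; exact: CL_L uCL.
have -> : u = f 1%g; last exact: hf.
rewrite -{1}uu {2}e mulr_sumr (bigD1 1%g) //= act1 big1 ?addr0.
  by case: (Jsub _ (hf 1%g)).
move=> t t1; case: (Jsub _ (hf t)) => _ <-.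
by rewrite act_mul mulrA uorth // mul0r.
Qed.

Definition in_span (bs : seq B) (v : B) :=
  exists f : nat -> B, (forall j, (j < size bs)%N -> f j \in CLp) /\
    v = \sum_(j < size bs) f j * nth 0 bs j.

Fixpoint indep (bs : seq B) : Prop :=
  if bs is b :: bs' then ~ in_span bs' (u * b) /\ indep bs' else True.

Lemma sig_uL x : u * x = x -> u * sigma x = sigma x.
Proof. by move=> h; rewrite -{1}(CL_sig uCL) -sig_mul h. Qed.

Lemma indep_rel bs : (forall b, b \in bs -> b \in C) -> indep bs ->
  forall m : nat -> B, (forall j, (j < size bs)%N -> m j \in L /\ u * m j = m j) ->
  \sum_(j < size bs) m j * nth 0 bs j = 0 -> forall j, (j < size bs)%N -> m j = 0.
Proof.
case: sig_bij => si siK siK'.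
elim: bs => [|b bs IH] hC hI m hm hsum j hj //.
case: hI => hnot hI'.
have hCb : b \in C by apply: hC; rewrite mem_head.
have hC' : forall b', b' \in bs -> b' \in C.
  by move=> b' hb; apply: hC; rewrite in_cons hb orbT.
have hnth (i : 'I_(size bs)) : nth 0 bs i \in C by apply: hC'; apply: mem_nth.
have hsum' : m 0%N * b + \sum_(i < size bs) m i.+1 * nth 0 bs i = 0.
  by rewrite -[RHS]hsum big_ord_recl.
have sigsum (g : nat -> B) x : sigma (x * b + \sum_(i < size bs) g i * nth 0 bs i)
    = sigma x * b + \sum_(i < size bs) sigma (g i) * nth 0 bs i.
  rewrite sigD sig_mul (HCs hCb) (mor_sum sigD); congr (_ + _).
  by apply: eq_bigr => i _; rewrite sig_mul (HCs (hnth i)).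
have m00 : m 0%N = 0.
  apply/eqP; apply/negP => m0.
  pose J x := x \in L /\ u * x = x /\ exists g : nat -> B,
    (forall j, (j < size bs)%N -> g j \in L /\ u * g j = g j) /\
    x * b + \sum_(j < size bs) g j * nth 0 bs j = 0.
  have hJ : J u.
    apply: (@uL_simple J _ _ _ _ _ (m 0%N)) => //.
    - by move=> x [? [? _]].
    - split; first exact: (sub0 HL).
      split; first by rewrite mulr0.
      exists (fun _ => 0); split => [j' _|]; first by rewrite mulr0 (sub0 HL).
      by rewrite mul0r add0r big1 // => i _; rewrite mul0r.
    - move=> x y [hx [ux [g [hg eg]]]] [hy [uy [g' [hg' eg']]]].
      split; first exact: (subB HL).
      split; first by rewrite mulrBr ux uy.
      exists (fun j => g j - g' j); split => [j' hj'|].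
        case: (hg j' hj') (hg' j' hj') => h1 h2 [h3 h4]; split; first exact: (subB HL).
        by rewrite mulrBr h2 h4.
      rewrite (eq_bigr (fun i : 'I_(size bs) => g i * nth 0 bs i - g' i * nth 0 bs i)).
        by rewrite sumrB mulrBl addrACA -opprD eg eg' subrr.
      by move=> i _; rewrite mulrBl.
    - move=> a x ha [hx [ux [g [hg eg]]]].
      split; first exact: (subM HL).
      split; first by rewrite mulrCA ux.
      exists (fun j => a * g j); split => [j' hj'|].
        case: (hg j' hj') => h1 h2; split; first exact: (subM HL).
        by rewrite mulrCA h2.
      transitivity (a * (x * b + \sum_(j < size bs) g j * nth 0 bs j)); last by rewrite eg mulr0.
      rewrite mulrDr mulrA mulr_sumr; congr (_ + _).
      by apply: eq_bigr => i _; rewrite mulrA.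
    - move=> x; split.
      + move=> [hx [ux [g [hg eg]]]]; split; first by rewrite -HLs.
        split; first exact: sig_uL.
        exists (fun j => sigma (g j)); split => [j' hj'|].
          case: (hg j' hj') => h1 h2; split; first by rewrite -HLs.
          exact: sig_uL.
        transitivity (sigma (x * b + \sum_(j < size bs) g j * nth 0 bs j)); first by rewrite (sigsum g).
        by rewrite eg (mor0 sigD).
      + move=> [hx [ux [g [hg eg]]]]; split; first by rewrite HLs.
        split; first by apply: sig_inj; rewrite sig_mul (CL_sig uCL).
        exists (fun j => si (g j)); split => [j' hj'|].
          case: (hg j' hj') => h1 h2; split; first by rewrite HLs siK'.
          by apply: sig_inj; rewrite sig_mul (CL_sig uCL) siK'.
        apply: sig_inj; rewrite (sigsum (fun j => si (g j))) (mor0 sigD); rewrite -[RHS]eg; congr (_ + _).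
        by apply: eq_bigr => i _; rewrite siK'.
    - split; first by case: (hm 0%N isT).
      split; first by case: (hm 0%N isT).
      exists (fun j => m j.+1); split => [j' hj'|]; last exact: hsum'.
      by apply: hm.
    - exact/negP.
  case: hJ => _ [_ [g [hg eg]]].
  have eg2 : u * b + \sum_(j < size bs) sigma (g j) * nth 0 bs j = 0.
    transitivity (sigma (u * b + \sum_(j < size bs) g j * nth 0 bs j)).
      by rewrite (sigsum g) (CL_sig uCL).
    by rewrite eg (mor0 sigD).
  have hz := IH hC' hI' (fun j => sigma (g j) - g j).
  have hz' : forall j, (j < size bs)%N -> sigma (g j) - g j = 0.
    apply: hz.
      move=> j' hj'; case: (hg j' hj') => h1 h2; split.
        by apply: (subB HL) => //; rewrite -HLs.
      by rewrite mulrBr sig_uL // h2.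
    rewrite (eq_bigr (fun i : 'I_(size bs) => sigma (g i) * nth 0 bs i - g i * nth 0 bs i)).
      rewrite sumrB -(addrKA (u * b) (\sum_(i < size bs) sigma (g i) * nth 0 bs i));
      by rewrite [X in X - _]addrC eg2 eg subrr.
    by move=> i _; rewrite mulrBl.
  apply: hnot; exists (fun j => - g j); split.
    move=> j' hj'; apply: CLN; case: (hg j' hj') => h1 _.
    by rewrite inE h1 /= (subr0_eq (hz' j' hj')).
  have -> : u * b = - \sum_(j < size bs) g j * nth 0 bs j.
    by apply/eqP; rewrite -addr_eq0 eg.
  by rewrite -sumrN; apply: eq_bigr => i _; rewrite mulNr.
case: j hj => [|j] hj; first exact: m00.
apply: (IH hC' hI' (fun j => m j.+1)) => //.
  by move=> j' hj'; apply: hm.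
by move: hsum'; rewrite m00 mul0r add0r.
Qed.


Lemma basis (cs : seq B) : (forall c, c \in cs -> c \in C) ->
  exists bs : seq B, [/\ forall b, b \in bs -> b \in C, indep bs &
    exists A : B -> nat -> B, forall c, c \in cs ->
      (forall j, (j < size bs)%N -> A c j \in CLp) /\
      u * c = \sum_(j < size bs) A c j * nth 0 bs j].
Proof.
elim: cs => [|c cs IH] hcs.
  by exists [::]; split => //; exists (fun _ _ => 0) => c; rewrite in_nil.
have hc : c \in C by apply: hcs; rewrite mem_head.
have [bs [hbC hbI [A hA]]] : exists bs : seq B, [/\ forall b, b \in bs -> b \in C, indep bs &
    exists A : B -> nat -> B, forall c, c \in cs ->
      (forall j, (j < size bs)%N -> A c j \in CLp) /\
      u * c = \sum_(j < size bs) A c j * nth 0 bs j].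
  by apply: IH => c' h; apply: hcs; rewrite in_cons h orbT.
case: (classic (in_span bs (u * c))) => [[f [hf ef]] | hn].
  exists bs; split => //; exists (fun c' => if c' == c then f else A c') => c'.
  by rewrite in_cons; case: eqP => [-> _ | _ /= hc']; [split | exact: hA].
exists (c :: bs); split => //.
  by move=> b; rewrite in_cons => /orP [/eqP -> | ]; [exact: hc | exact: hbC].
exists (fun c' => if c' == c then (fun j => if j == 0%N then u else 0)
                 else (fun j => if j == 0%N then 0 else A c' j.-1)) => c'.
rewrite in_cons; case: eqP => [-> _ | _ /= hc'].
  split; first by move=> [|j'] _ /=; [exact: uCL | exact: CL0].
  rewrite big_ord_recl /= big1 ?addr0 // => i _.
  by rewrite ?lift0 /= ?mul0r.
case: (hA c' hc') => hA1 hA2; split.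
  by move=> [|j'] hj' /=; [exact: CL0 | exact: hA1].
rewrite big_ord_recl /= mul0r add0r hA2; apply: eq_bigr => i _.
by rewrite ?lift0.
Qed.

Lemma sum_mulz (X : Type) (r : seq X) (F : X -> B) z :
  (\sum_(x <- r) F x) *~ z = \sum_(x <- r) F x *~ z.
Proof. by apply: (mor_sum (f := fun y => y *~ z)) => x y; rewrite mulrzDl. Qed.

Lemma ML (t : fsum B) :
  (forall e, e \in t -> [/\ e.1.1 \in L, u * e.1.1 = e.1.1 & e.1.2 \in C]) ->
  tensor_mult t = 0 -> tensor_zero L C CLp t.
Proof.
move=> ht hm.
have [bs [hbC hbI [A hA]]] := basis (cs := [seq e.1.2 | e <- t])
  (fun c hc => match mapP hc with ex_intro2 e he ec =>
     eq_ind_r (fun c => c \in C) (let: And3 _ _ h := ht e he in h) ec end).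
set k := size bs.
have hA' e : e \in t -> (forall j, (j < k)%N -> A e.1.2 j \in CLp) /\
    u * e.1.2 = \sum_(j < k) A e.1.2 j * nth 0 bs j.
  by move=> he; apply: hA; apply: map_f.
pose w (j : nat) := \sum_(e <- t) (e.1.1 * A e.1.2 j) *~ e.2.
have hbj (j : 'I_k) : nth 0 bs j \in C by apply: hbC; apply: mem_nth.
have hw : forall j, (j < k)%N -> w j = 0.
  apply: (indep_rel hbC hbI).
    move=> j hj; split.
      rewrite /w big_seq; apply: (sub_sum HL) => e he.
      case: (ht e he) => hl _ _; case: (hA' e he) => h1 _.
      by apply: (subMz HL); apply: (subM HL) => //; apply: CL_L; apply: h1.
    rewrite /w mulr_sumr; apply: eq_big_seq => e he.
    by case: (ht e he) => _ ul _; rewrite mulrzAr mulrA ul.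
  transitivity (tensor_mult t); last exact: hm.
  rewrite /tensor_mult /w.
  rewrite (eq_bigr (fun j : 'I_k => \sum_(e <- t) (e.1.1 * A e.1.2 j) *~ e.2 * nth 0 bs j));
    last by move=> j _; rewrite mulr_suml.
  rewrite exchange_big /=; apply: eq_big_seq => e he.
  case: (ht e he) => hl ul hc; case: (hA' e he) => _ hs.
  have -> : e.1.1 * e.1.2 = e.1.1 * (u * e.1.2) by rewrite mulrA (mulrC _ u) ul.
  rewrite hs mulr_sumr sum_mulz; apply: eq_bigr => j _.
  by rewrite mulrzAl mulrA.
pose F (e : (B * B) * int) (j : 'I_k) := ((e.1.1 * A e.1.2 j, nth 0 bs j), e.2).
have step1 : eqv L C CLp t (flatten [seq [seq F e j | j : 'I_k <- index_enum 'I_k] | e <- t]).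
  apply: (@eqv_trans _ _ _ _ _ (flatten [seq [:: e] | e <- t])).
    by rewrite flatten_seq1; apply: eqv_refl.
  apply: eqv_flatten => e he.
  case: (ht e he) (hA' e he) => hl ul hc [hA1 hs].
  move: hl ul hc hA1 hs; case: e {he} => [[l c] z] /= hl ul hc hA1 hs.
  have hAj (j : 'I_k) : A c j * nth 0 bs j \in C.
    by apply: (subM HC) => //; apply: HLC; [apply: CL_L | apply: CL_sig]; apply: hA1.
  apply: (@eqv_trans _ _ _ _ _ (fscale z [:: ((l, c), 1)])).
    by apply: eqv_fc => lc; rewrite !fcoef_cons !fcoef_nil mul1r.
  have h2 : eqv L C CLp (fscale z [seq ((l * A c j, nth 0 bs j), 1%:Z) | j : 'I_k <- index_enum 'I_k])
      [seq F ((l, c), z) j | j : 'I_k <- index_enum 'I_k].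
    have -> : fscale z [seq ((l * A c j, nth 0 bs j), 1%:Z) | j : 'I_k <- index_enum 'I_k]
      = [seq F ((l, c), z) j | j : 'I_k <- index_enum 'I_k].
      by rewrite /fscale -map_comp; apply: eq_map => j /=; rewrite mul1r.
    exact: eqv_refl.
  apply: (eqv_trans _ h2); apply: eqv_scale.
  apply: (@eqv_trans _ _ _ _ _ [:: ((l, u * c), 1)]).
    have := E_bal (C := C) hl uCL hc.
    by rewrite (mulrC l u) ul.
  rewrite hs.
  apply: (@eqv_trans _ _ _ _ _ [seq ((l, A c j * nth 0 bs j), 1) | j : 'I_k <- index_enum 'I_k]).
    by apply: eqv_sym; apply: merge_r => // j _.
  apply: eqv_map => j _; apply: eqv_sym; apply: E_bal => //.
  by apply: hA1.
have step2 : eqv L C CLp (flatten [seq [seq F e j | j : 'I_k <- index_enum 'I_k] | e <- t])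
    (flatten [seq [seq F e j | e <- t] | j : 'I_k <- index_enum 'I_k]).
  apply: eqv_fc => lc; rewrite !fcoef_flatten !big_map.
  under eq_bigr => x _ do rewrite fcoef_map.
  under [RHS]eq_bigr => x _ do rewrite fcoef_map.
  exact: exchange_big.
have step3 (j : 'I_k) : eqv L C CLp [seq F e j | e <- t] [::].
  apply: (@eqv_trans _ _ _ _ _ [seq ((e.1.1 * A e.1.2 j *~ e.2, nth 0 bs j), 1) | e <- t]).
    apply: eqv_map => e he; case: (ht e he) => hl _ _; case: (hA' e he) => h1 _.
    apply: E_mulz => //; apply: (subM HL) => //; apply: CL_L; exact: h1.
  apply: (@eqv_trans _ _ _ _ _ [:: ((w j, nth 0 bs j), 1)]).
    apply: merge_l => // e he; case: (ht e he) => hl _ _; case: (hA' e he) => h1 _.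
    by apply: (subMz HL); apply: (subM HL) => //; apply: CL_L; exact: h1.
  by rewrite hw //; apply: E_zero.
apply: eqv_tz; apply: (eqv_trans step1); apply: (eqv_trans step2).
apply: (eqv_trans (eqv_flatten (fun j (_ : j \in index_enum 'I_k) => step3 j))).
exact: eqv_nil_flatten.
Qed.

Lemma main_u : tensor_mult_injective L C CLp.
Proof.
move=> s hs hm.
pose G (t : gT) (e : (B * B) * int) := ((act t u * e.1.1, e.1.2), e.2).
have stepA : eqv L C CLp s (flatten [seq [seq G t e | t <- index_enum gT] | e <- s]).
  apply: (@eqv_trans _ _ _ _ _ (flatten [seq [:: e] | e <- s])).
    by rewrite flatten_seq1; apply: eqv_refl.
  apply: eqv_flatten => e he.
  have /andP [hl hc] := hs e he.
  move: hl hc; case: e {he} => [[l c] z] /= hl hc.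
  apply: (@eqv_trans _ _ _ _ _ (fscale z [:: ((l, c), 1)])).
    by apply: eqv_fc => lc; rewrite !fcoef_cons !fcoef_nil mul1r.
  have h2 : eqv L C CLp (fscale z [seq ((act t u * l, c), 1%:Z) | t <- index_enum gT])
      [seq G t ((l, c), z) | t <- index_enum gT].
    have -> : fscale z [seq ((act t u * l, c), 1%:Z) | t <- index_enum gT]
      = [seq G t ((l, c), z) | t <- index_enum gT].
      by rewrite /fscale -map_comp; apply: eq_map => t /=; rewrite mul1r.
    exact: eqv_refl.
  apply: (eqv_trans _ h2); apply: eqv_scale.
  have hsl : \sum_(t <- index_enum gT) act t u * l = l.
    by rewrite -mulr_suml usum mul1r.
  rewrite -{1}hsl; apply: eqv_sym; apply: merge_l => // t _.
  by apply: (subM HL) => //; apply: HLa; apply: CL_L.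
have stepB : eqv L C CLp (flatten [seq [seq G t e | t <- index_enum gT] | e <- s])
    (flatten [seq [seq G t e | e <- s] | t <- index_enum gT]).
  apply: eqv_fc => lc; rewrite !fcoef_flatten !big_map.
  under eq_bigr => x _ do rewrite fcoef_map.
  under [RHS]eq_bigr => x _ do rewrite fcoef_map.
  exact: exchange_big.
have stepC (t : gT) : eqv L C CLp [seq G t e | e <- s] [::].
  pose s' := [seq ((u * act t^-1 e.1.1, act t^-1 e.1.2), e.2) | e <- s].
  have -> : [seq G t e | e <- s] = actmap t s'.
    rewrite /actmap /s' -map_comp; apply: eq_map => e /=.
    by rewrite act_mul !act_invr.
  apply: tz_eqv; apply: tz_act; apply: ML.
    move=> e /mapP [e' he' ->] /=; have /andP [hl hc] := hs e' he'.
    split; [|by rewrite mulrA uu|exact: HCa].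
    by apply: (subM HL); [apply: CL_L | apply: HLa].
  transitivity (act t^-1 (act t u * tensor_mult s)); last first.
    by rewrite hm mulr0 (mor0 (actD _)).
  rewrite /tensor_mult /s' big_map mulr_sumr (mor_sum (actD _)).
  apply: eq_bigr => e _ /=.
  by rewrite mulrzAr (morMz (actD _)) !act_mul act_inv mulrA.
apply: eqv_tz; apply: (eqv_trans stepA); apply: (eqv_trans stepB).
apply: (eqv_trans (eqv_flatten (fun t (_ : t \in index_enum gT) => stepC t))).
exact: eqv_nil_flatten.
Qed.

End Main.
Section Point.
Variables (gT : finGroupType) (B : comNzRingType) (sigma : B -> B)
  (act : gT -> B -> B) (L : {pred B}).
Hypotheses (HSA : Sigma_action sigma act) (HL : is_subring L)
  (HLa : forall g x, x \in L -> act g x \in L)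
  (HCL : Sigma1_closed act (CLp sigma L)).

Definition CLk : {pred B} := CLp sigma L.

Lemma CLk_subring : GRing.subring_closed CLk.
Proof.
split.
- rewrite inE (sub1 HL) /=; case: HSA => _ [[h _] _] _ _; by rewrite h.
- move=> x y /andP [hx /eqP ex] /andP [hy /eqP ey].
  by rewrite inE (subB HL) //= (morB (sigD HSA)) ex ey.
- move=> x y /andP [hx /eqP ex] /andP [hy /eqP ey].
  by rewrite inE (subM HL) //= (sig_mul HSA) ex ey.
Qed.

HB.instance Definition _ := GRing.isSubringClosed.Build B CLk CLk_subring.

Definition FB : Type := {ffun gT -> B}.
HB.instance Definition _ := GRing.NzRing.copy FB (ffun_ring B (1%g : gT)).
HB.instance Definition _ := GRing.PzRing_hasCommutativeMul.Build FB (@ffun_mulC gT B).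

Definition phi (b : B) : FB := [ffun g => act g b].

Lemma phi_add : additive phi.
Proof. by move=> x y; apply/ffunP => g; rewrite !ffunE (morB (actD HSA g)). Qed.
HB.instance Definition _ := GRing.isAdditive.Build B FB phi phi_add.
Lemma phi_mul : multiplicative phi.
Proof.
split; first by move=> x y; apply/ffunP => g; rewrite !ffunE (act_mul HSA).
by apply/ffunP => g; rewrite !ffunE (act_1 HSA).
Qed.
HB.instance Definition _ := GRing.isMultiplicative.Build B FB phi phi_mul.

Definition rho (t : gT) (f : FB) : FB := [ffun g => f (g * t)%g].
Lemma rho_add t : additive (rho t).
Proof. by move=> x y; apply/ffunP => g; rewrite !ffunE. Qed.
HB.instance Definition _ t := GRing.isAdditive.Build FB FB (rho t) (rho_add t).
Lemma rho_mul t : multiplicative (rho t).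
Proof. by split; [move=> x y|]; apply/ffunP => g; rewrite !ffunE. Qed.
HB.instance Definition _ t := GRing.isMultiplicative.Build FB FB (rho t) (rho_mul t).

Definition hv (j : 'I_(nvar gT 1)) : FB := [ffun g => ((g * (enum_val j).2)%g == 1%g)%:R].

Local Notation ev := (mmap phi hv).

Lemma ev_act t (p : {mpoly B[nvar gT 1]}) : ev (spoly_act act t p) = rho t (ev p).
Proof.
pose k (j : 'I_(nvar gT 1)) : {mpoly B[nvar gT 1]} :=
  'X_(spoly_var (enum_val j).1 (t * (enum_val j).2)%g).
have -> : spoly_act act t p = \sum_(m <- msupp p) (act t p@_m)%:MP * mmap1 k m by [].
rewrite raddf_sum [in RHS]/mmap raddf_sum; apply: eq_bigr => m _.
rewrite /= rmorphM rmorphM /=; congr (_ * _).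
  rewrite (@mmapC _ _ _ hv phi).
  by apply/ffunP => g; rewrite !ffunE (actMg HSA).
rewrite /mmap1 !rmorph_prod; apply: eq_bigr => i _; rewrite !rmorphXn; congr (_ ^+ _).
rewrite /= /k (@mmapX _ _ _ hv phi) mmap1U; apply/ffunP => g; rewrite !ffunE /spoly_var enum_rankK /=.
by rewrite mulgA.
Qed.

Lemma exists_u : exists u, [/\ u \in CLp sigma L, u * u = u,
  forall t, t != 1%g -> u * act t u = 0 & \sum_(t : gT) act t u = 1].
Proof.
pose I (p : {mpoly B[nvar gT 1]}) := p \is a mpolyOver _ CLk /\ ev p = 0.
have hI : is_Sigma1_poly_ideal act (CLp sigma L) I.
  split.
  - by move=> p [].
  - by split; [exact: mpolyOver0 | exact: raddf0].
  - move=> p q [hp ep] [hq eq]; split; first exact: rpredB.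
    by rewrite raddfB /= ep eq subrr.
  - move=> a p ha [hp ep]; split; first exact: rpredM.
    by rewrite rmorphM /= ep mulr0.
  - move=> t p [hp ep]; split; last by rewrite ev_act ep raddf0.
    rewrite /spoly_act /mmap; apply: rpred_sum => m _; apply: rpredM.
      rewrite mpolyOverC; apply: (CL_act HSA HLa).
      by move/mpolyOverP: hp; apply.
    by rewrite /mmap1; apply: rpred_prod => i _; apply: rpredX; apply: mpolyOverX.
have h1 : (1 : {mpoly B[nvar gT 1]}) \is a mpolyOver _ CLk by apply: rpred1.
case: HCL => _ /(_ 1%N I hI 1 h1) [_ hV].
have [x [hx0 hxI]] : exists x, spoly_V act (CLp sigma L) I x.
  apply: NNPP => hn.
  have [m [_ hm]] := hV (fun x hx => False_ind _ (hn (ex_intro _ x hx))).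
  move: hm; rewrite expr1n rmorph1 => /ffunP /(_ 1%g); rewrite !ffunE => /eqP.
  by rewrite oner_eq0.
pose Xt (t : gT) : {mpoly B[nvar gT 1]} := 'X_(spoly_var ord0 t).
have evalX t : spoly_eval act x (Xt t) = act t (x ord0).
  by rewrite /spoly_eval mevalXU /spoly_var enum_rankK.
have evX t : ev (Xt t) = [ffun g => ((g * t)%g == 1%g)%:R].
  by rewrite (@mmapX _ _ _ hv phi) mmap1U; apply/ffunP => g; rewrite !ffunE /spoly_var enum_rankK.
have hov t : Xt t \is a mpolyOver _ CLk by apply: mpolyOverX.
exists (x ord0); split.
- exact: hx0.
- have h : I (Xt 1%g * Xt 1%g - Xt 1%g).
    split; first by rewrite rpredB ?rpredM.
    rewrite rmorphB /= rmorphM /= evX; apply/ffunP => g; rewrite !ffunE.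
    by case: (_ == _); rewrite ?mulr1 ?mulr0 subrr.
  have := hxI _ h; rewrite /spoly_eval mevalB mevalM -!/(spoly_eval act x _) evalX.
  by rewrite (act1 HSA) => /subr0_eq.
- move=> t t1.
  have h : I (Xt 1%g * Xt t).
    split; first by rewrite rpredM.
    rewrite rmorphM /= !evX; apply/ffunP => g; rewrite !ffunE mulg1.
    case: eqP => [->|_]; last by rewrite mul0r.
    by rewrite mul1g (negbTE t1) mulr0.
  have := hxI _ h; rewrite /spoly_eval mevalM -!/(spoly_eval act x _) !evalX.
  by rewrite (act1 HSA).
- have h : I (\sum_(t : gT) Xt t - 1).
    split; first by rewrite rpredB ?rpred1 // rpred_sum.
    rewrite rmorphB /= rmorph1 raddf_sum /=.
    under eq_bigr => t _ do rewrite evX.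
    apply/ffunP => g; rewrite !ffunE.

    rewrite sum_ffunE (bigD1 g^-1%g) //= !ffunE mulgV eqxx big1 ?addr0 ?subrr //.
    move=> t tg; rewrite ffunE.
    case: eqP => // e; exfalso; move: tg.
    by rewrite -(mulKg g t) e mulg1 eqxx.
  have := hxI _ h; rewrite /spoly_eval mevalB meval1 raddf_sum /= /Xt.
  under eq_bigr => t _ do rewrite mevalXU /spoly_var enum_rankK /=.
  by move/subr0_eq.
Qed.

End Point.

Theorem corollary1 (gT : finGroupType) (B : comNzRingType)
  (sigma : B -> B) (act : gT -> B -> B) (L C : {pred B}) :
  abelian [set: gT] ->
  Sigma_action sigma act ->
  (* L is a Sigma-subring of B and a Sigma-pseudofield *)
  is_subring L ->
  (forall x, (x \in L) = (sigma x \in L)) ->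
  (forall g x, x \in L -> act g x \in L) ->
  Sigma_pseudofield sigma act L ->
  (* C_L := L^sigma is Sigma_1-closed *)
  Sigma1_closed act [pred x | (x \in L) && (sigma x == x)] ->
  (* C is a Sigma_1-stable subring of B^sigma containing C_L *)
  is_subring C ->
  (forall g x, x \in C -> act g x \in C) ->
  (forall x, x \in C -> sigma x = x) ->
  (forall x, x \in L -> sigma x = x -> x \in C) ->
  tensor_mult_injective L C [pred x | (x \in L) && (sigma x == x)].
Proof.
move=> _ HSA HL HLs HLa HLp HCL HC HCa HCs HLC.
have [u [uCL uu uorth usum]] := exists_u HSA HL HLa HCL.
exact: (main_u HSA HL HLs HLa HLp HC HCa HCs HLC uCL uu uorth usum).
Qed.
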